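(* Let $\lambda,\mu>0$, let $X$ be the stationary birth–death process with rates $\lambda_n=\lambda$, $\mu_n=\mu n$ (marginal Poisson with mean $\lambda/\mu$), and $\Lambda(t)=\exp\{X(t)-\frac{\lambda}{\mu}(e-1)\}$. Then there is a constant $c>0$ such that for all $\tau\in\mathbb{R}$, $$c\,e^{-\mu|\tau|}\le \operatorname{Cov}(\Lambda(t),\Lambda(t+\tau))\le \operatorname{Var}(\Lambda(0))\,e^{-\mu|\tau|}.$$
   Context: The birth–death process is started in its stationary (Poisson) distribution, so $\Lambda$ is strictly stationary. *)

(* Defs.v *)
From Stdlib Require Import Reals Arith.
Open Scope R_scope.

Definition rho (lam mu : R) : R := lam / mu.

Definition pi_st (lam mu : R) (n : nat) : R :=
  exp (- rho lam mu) * rho lam mu ^ n / INR (Factorial.fact n).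

(* Lambda(t) = f(X(t)) with f(n) = exp{n - (lambda/mu)(e-1)}. *)
Definition Lf (lam mu : R) (n : nat) : R :=
  exp (INR n - rho lam mu * (exp 1 - 1)).

(* (Q g)(n) = lambda (g(n+1) - g(n)) + mu n (g(n-1) - g(n)); the n = 0 death
   term vanishes because mu*0 = 0. *)
Definition backward_rhs (lam mu : R) (P : R -> nat -> nat -> R)
  (t : R) (n m : nat) : R :=
  lam * P t (S n) m + mu * INR n * P t (Nat.pred n) m
  - (lam + mu * INR n) * P t n m.

(* P is a (standard) transition function of the chain with rates
   lambda_n = lambda, mu_n = mu n : stochastic matrices for t >= 0,
   P(0) = I, right-continuous at 0 and satisfying Kolmogorov's backward
   equations for t > 0.  For this non-explosive chain this determines P
   uniquely (it is the transition function of X). *)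
Definition bd_transition (lam mu : R) (P : R -> nat -> nat -> R) : Prop :=
  (forall t n m, 0 <= t -> 0 <= P t n m) /\
  (forall t n, 0 <= t -> infinite_sum (fun m => P t n m) 1) /\
  (forall n m, P 0 n m = if Nat.eqb n m then 1 else 0) /\
  (forall n m eps, 0 < eps -> exists d, 0 < d /\
      forall t, 0 < t < d -> Rabs (P t n m - P 0 n m) < eps) /\
  (forall t n m, 0 < t ->
      derivable_pt_lim (fun s => P s n m) t (backward_rhs lam mu P t n m)).

(* Cov(Lambda(t), Lambda(t+tau)) = v for the stationary chain:
   E[Lambda(t) Lambda(t+tau)] = sum_n pi_n f(n) sum_m P_{|tau|}(n,m) f(m)
   (stationarity / time-reversal gives dependence on |tau| only),
   E[Lambda(t)] = sum_n pi_n f(n). *)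
Definition is_cov (lam mu : R) (P : R -> nat -> nat -> R) (tau v : R) : Prop :=
  exists (g : nat -> R) (S M : R),
    (forall n, infinite_sum (fun m => P (Rabs tau) n m * Lf lam mu m) (g n)) /\
    infinite_sum (fun n => pi_st lam mu n * Lf lam mu n * g n) S /\
    infinite_sum (fun n => pi_st lam mu n * Lf lam mu n) M /\
    v = S - M * M.

Definition is_var (lam mu : R) (V : R) : Prop :=
  exists S2 M : R,
    infinite_sum (fun n => pi_st lam mu n * (Lf lam mu n * Lf lam mu n)) S2 /\
    infinite_sum (fun n => pi_st lam mu n * Lf lam mu n) M /\
    V = S2 - M * M.

(* Main.v *)
Require Import Defs.
From Stdlib Require Import Reals Arith Lra Lia Psatz.
Open Scope R_scope.

Definition bw (lam mu : R) (w : R -> nat -> R) (t : R) (n : nat) : R :=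
  lam * w t (S n) + mu * INR n * w t (Nat.pred n) - (lam + mu * INR n) * w t n.

Lemma left_max f x l a : a < x -> derivable_pt_lim f x l ->
  (forall s, a <= s <= x -> f s <= f x) -> 0 <= l.
Proof.
  intros Hax Hd Hm. destruct (Rle_or_lt 0 l) as [|Hl]; [assumption|].
  exfalso. destruct (Hd (-l/2)) as [del Hdel]; [lra|].
  pose (h := - Rmin (del/2) ((x-a)/2)).
  assert (Hp : 0 < Rmin (del/2) ((x-a)/2)).
  { apply Rmin_glb_lt; pose proof (cond_pos del); lra. }
  assert (H1 := Rmin_l (del/2) ((x-a)/2)). assert (H2 := Rmin_r (del/2) ((x-a)/2)).
  assert (Hh : h <> 0) by (unfold h; lra).
  assert (Hah : Rabs h < del).
  { unfold h. rewrite Rabs_Ropp, Rabs_pos_eq by lra. pose proof (cond_pos del); lra. }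
  specialize (Hdel h Hh Hah).
  assert (Hf : f (x+h) <= f x) by (apply Hm; unfold h; lra).
  set (q := (f (x + h) - f x) / h) in *.
  assert (Hq : q * h = f (x+h) - f x) by (unfold q; field; auto).
  assert (0 <= q) by (unfold h in *; nra).
  apply Rabs_def2 in Hdel. lra.
Qed.

Lemma common_delta (Pr : nat -> R -> Prop) :
  (forall n, exists d, 0 < d /\ forall s, 0 < s < d -> Pr n s) ->
  forall N, exists a, 0 < a /\ forall s n, 0 < s < a -> (n < N)%nat -> Pr n s.
Proof.
  intros H N. induction N as [|N IH].
  - exists 1. split; [lra|]. intros; lia.
  - destruct IH as [a [Ha Ha']]. destruct (H N) as [d [Hd Hd']].
    exists (Rmin a d). split; [apply Rmin_glb_lt; auto|].
    intros s n Hs Hn. assert (H1 := Rmin_l a d). assert (H2 := Rmin_r a d).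
    destruct (Nat.eq_dec n N) as [->|]. apply Hd'; lra. apply Ha'; [lra|lia].
Qed.

Lemma fin_argmax (F : nat -> R -> R) a b : a <= b ->
  (forall n c, a <= c <= b -> continuity_pt (F n) c) ->
  forall N, exists n t, (n <= N)%nat /\ a <= t <= b /\
    forall k s, (k <= N)%nat -> a <= s <= b -> F k s <= F n t.
Proof.
  intros Hab Hc N. induction N as [|N IH].
  - destruct (continuity_ab_maj (F 0%nat) a b Hab (Hc 0%nat)) as [M [HM HM']].
    exists 0%nat, M. split; [lia|]. split; auto. intros k s Hk Hs.
    replace k with 0%nat by lia. auto.
  - destruct IH as [n [t [HnN [Ht Hnt]]]].
    destruct (continuity_ab_maj (F (S N)) a b Hab (Hc (S N))) as [M [HM HM']].
    destruct (Rle_or_lt (F n t) (F (S N) M)).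
    + exists (S N), M. split; [lia|]. split; auto. intros k s Hk Hs.
      destruct (Nat.eq_dec k (S N)) as [->|]. auto.
      eapply Rle_trans; [apply Hnt; auto; lia|auto].
    + exists n, t. split; [lia|]. split; auto. intros k s Hk Hs.
      destruct (Nat.eq_dec k (S N)) as [->|]. eapply Rle_trans; [apply HM; auto|lra].
      apply Hnt; auto; lia.
Qed.

Lemma two_pow_ge n : INR n <= 2 ^ n.
Proof.
  induction n. simpl; lra. rewrite S_INR. simpl.
  assert (1 <= 2^n) by (apply pow_R1_Rle; lra). lra.
Qed.

Lemma maxp lam mu (w : R -> nat -> R) : 0 < lam -> 0 < mu ->
  (forall t n, 0 < t -> derivable_pt_lim (fun s => w s n) t (bw lam mu w t n)) ->
  (forall n, w 0 n <= 0) ->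
  (forall n eps, 0 < eps -> exists d, 0 < d /\ forall t, 0 < t < d -> w t n < eps) ->
  (exists K c, 1 <= c /\ forall t n, 0 <= t -> w t n <= K * c ^ n) ->
  forall t n, 0 <= t -> w t n <= 0.
Proof.
  intros Hl Hm Hd H0 Hrc [K [c [Hc Hg]]] t0 n0 Ht0.
  destruct (Req_dec t0 0) as [->|Ht0']; [apply H0|].
  destruct (Rle_or_lt (w t0 n0) 0) as [|Hpos]; [assumption|exfalso].
  set (b := 2 * c). set (C := lam * b).
  assert (Hb : 2 <= b) by (unfold b; lra).
  assert (HE : forall s, 0 <= s -> 1 <= exp (C * s)).
  { intros s Hs. rewrite <- exp_0. assert (0 <= C * s) by (apply Rmult_le_pos; [unfold C; apply Rmult_le_pos; lra|lra]). destruct (Req_dec (C*s) 0) as [->|]; [lra|]. left; apply exp_increasing; lra. }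
  assert (Hbn : forall n, 1 <= b ^ n) by (intros; apply pow_R1_Rle; lra).
  assert (HE0 : 0 < exp (C * t0) * b ^ n0).
  { specialize (Hbn n0). pose proof (exp_pos (C*t0)). nra. }
  set (eps := w t0 n0 / (2 * (exp (C * t0) * b ^ n0))).
  assert (Heps : 0 < eps) by (unfold eps; apply Rdiv_lt_0_compat; lra).
  set (W := fun s n => w s n - eps * exp (C * s) * b ^ n).
  assert (HW0 : W t0 n0 = w t0 n0 / 2).
  { unfold W, eps. field. split; apply Rgt_not_eq; [apply pow_lt; lra|apply exp_pos]. }
  destruct (INR_unbounded (K / eps)) as [N HN].
  assert (Hgr : forall s n, 0 <= s -> (N <= n)%nat -> W s n < 0).
  { intros s n Hs Hn. unfold W. specialize (Hg s n Hs).
    assert (HN2 : K / eps < 2 ^ n).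
    { eapply Rlt_le_trans; [apply HN|]. eapply Rle_trans; [apply le_INR; apply Hn|apply two_pow_ge]. }
    assert (HK : K < eps * 2 ^ n).
    { apply (Rmult_lt_compat_l eps) in HN2; auto. unfold Rdiv in HN2.
      rewrite <- Rmult_assoc, (Rmult_comm eps K), Rmult_assoc, Rinv_r, Rmult_1_r in HN2; lra. }
    assert (Hcn : 0 < c ^ n) by (apply pow_lt; lra).
    assert (Hbb : b ^ n = 2 ^ n * c ^ n) by (unfold b; apply Rpow_mult_distr).
    specialize (HE s Hs). rewrite Hbb.
    assert (K * c^n < eps * 2^n * c^n) by nra.
    assert (0 <= eps * 2^n * c^n).
    { assert (0 < 2^n) by (apply pow_lt; lra). apply Rmult_le_pos; [apply Rmult_le_pos|]; lra. }
    assert (Hq : eps * exp (C * s) * (2^n * c^n) = exp (C * s) * (eps * 2^n * c^n)) by ring.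
    rewrite Hq. assert (0 <= (exp (C * s) - 1) * (eps * 2^n * c^n)) by (apply Rmult_le_pos; lra).
    nra. }
  destruct (common_delta (fun n s => W s n < 0)) with (N := N) as [a [Ha Ha']].
  { intros n. destruct (Hrc n eps Heps) as [d [Hd0 Hd']]. exists d. split; auto.
    intros s Hs. unfold W. specialize (Hd' s Hs). specialize (HE s ltac:(lra)).
    specialize (Hbn n). assert (eps * 1 <= eps * exp (C*s) * b^n).
    { rewrite Rmult_assoc. apply Rmult_le_compat_l; [lra|]. nra. }
    lra. }
  assert (HWneg : forall s n, 0 < s < a -> W s n < 0).
  { intros s n Hs. destruct (Nat.lt_ge_cases n N). apply Ha'; auto. apply Hgr; [lra|lia]. }
  assert (Hta : a <= t0).
  { destruct (Rle_or_lt a t0); auto. specialize (HWneg t0 n0 ltac:(lra)). lra. }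
  assert (HdW : forall n s, 0 < s -> derivable_pt_lim (fun s => W s n) s
              (bw lam mu w s n - eps * (C * exp (C * s)) * b ^ n)).
  { intros n s Hs. unfold W.
    apply derivable_pt_lim_minus; [apply Hd; auto|].
    apply derivable_pt_lim_scal_right with (f := fun s => eps * exp (C * s)).
    apply derivable_pt_lim_scal with (f := fun s => exp (C * s)).
    replace (C * exp (C * s)) with (exp (C * s) * C) by ring.
    apply (derivable_pt_lim_comp (fun s => C * s) exp).
    { pose proof (derivable_pt_lim_scal id C s 1 (derivable_pt_lim_id s)) as HH.
      rewrite Rmult_1_r in HH. exact HH. }
    apply derivable_pt_lim_exp. }
  destruct (fin_argmax (fun n s => W s n) (a/2) t0) with (N := N) as [ns [ts [HnsN [Hts Hmax]]]].
  { lra. }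
  { intros n c0 Hc0. apply derivable_continuous_pt. eexists. apply HdW. lra. }
  assert (Hn0 : (n0 <= N)%nat).
  { destruct (Nat.le_gt_cases n0 N); auto. specialize (Hgr t0 n0 ltac:(lra) ltac:(lia)). lra. }
  assert (Hge : W t0 n0 <= W ts ns) by (apply (Hmax n0 t0); auto; lra).
  assert (Hall : forall k, W ts k <= W ts ns).
  { intros k. destruct (Nat.le_gt_cases k N). apply (Hmax k ts); auto.
    specialize (Hgr ts k ltac:(lra) ltac:(lia)). lra. }
  assert (Htsa : a/2 < ts).
  { destruct Hts as [Hts1 _]. destruct (Rle_lt_or_eq_dec _ _ Hts1); auto.
    subst ts. specialize (HWneg (a/2) ns ltac:(lra)). lra. }
  pose proof (left_max (fun s => W s ns) ts _ (a/2) Htsa (HdW ns ts ltac:(lra))) as Hl0.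
  assert (Hd0 : 0 <= bw lam mu w ts ns - eps * (C * exp (C * ts)) * b ^ ns).
  { apply Hl0. intros s Hs. apply (Hmax ns s); auto; lra. }
  clear Hl0.
  assert (H1 := Hall (S ns)). assert (H2 := Hall (Nat.pred ns)).
  unfold W in H1, H2. unfold bw in Hd0.
  set (E := exp (C * ts)) in *.
  assert (HEp : 0 < E) by apply exp_pos.
  assert (Hpr : b ^ Nat.pred ns <= b ^ ns) by (apply Rle_pow; lia || lra).
  assert (HSb : b ^ S ns = b * b ^ ns) by reflexivity.
  assert (Hn : 0 <= INR ns) by apply pos_INR.
  unfold W in Hall.
  set (x0 := w ts ns) in *. set (x1 := w ts (S ns)) in *. set (x2 := w ts (Nat.pred ns)) in *.
  set (bn := b ^ ns) in *. set (bp := b ^ Nat.pred ns) in *. rewrite HSb in H1.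
  assert (A1 : lam * (x1 - x0) <= lam * (eps * E * (b * bn) - eps * E * bn)).
  { apply Rmult_le_compat_l; lra. }
  assert (A2 : mu * INR ns * (x2 - x0) <= mu * INR ns * (eps * E * bp - eps * E * bn)).
  { apply Rmult_le_compat_l; [nra|lra]. }
  assert (A3 : mu * INR ns * (eps * E * bp - eps * E * bn) <= 0).
  { assert (0 <= mu * INR ns) by nra. assert (eps * E * bp <= eps * E * bn).
    { apply Rmult_le_compat_l; [nra|lra]. } nra. }
  assert (A4 : 0 < lam * (eps * E * bn)).
  { assert (1 <= bn) by apply Hbn. apply Rmult_lt_0_compat; auto.
    apply Rmult_lt_0_compat; [apply Rmult_lt_0_compat|]; lra. }
  unfold C in Hd0.
  assert (Hd0' : 0 <= lam * (x1 - x0) + mu * INR ns * (x2 - x0) - lam * (eps * E * (b * bn))).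
  { match type of Hd0 with 0 <= ?X => replace (lam * (x1 - x0) + mu * INR ns * (x2 - x0) - lam * (eps * E * (b * bn))) with X by ring end. exact Hd0. }
  lra.
Qed.
Lemma dlim_ext f g x l l' : (forall s, f s = g s) -> l = l' ->
  derivable_pt_lim f x l -> derivable_pt_lim g x l'.
Proof.
  intros Hfg <- H eps He. destruct (H eps He) as [d Hd]. exists d.
  intros h Hh Hh'. rewrite <- !Hfg. auto.
Qed.

Lemma dlim_affine f x l a b : derivable_pt_lim f x l ->
  derivable_pt_lim (fun s => a + b * f s) x (b * l).
Proof.
  intros H. eapply dlim_ext; [| |apply derivable_pt_lim_plus;
    [apply (derivable_pt_lim_const a)|apply (derivable_pt_lim_scal f b x l H)]].
  intros; reflexivity. ring.
Qed.

Definition pp (mu t : R) : R := exp (- mu * t).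
Definition G (lam mu z : R) (t : R) (n : nat) : R :=
  exp (rho lam mu * (1 - pp mu t) * (z - 1)) * (1 + pp mu t * (z - 1)) ^ n.

Lemma pp_deriv mu t : derivable_pt_lim (fun s => pp mu s) t (- mu * pp mu t).
Proof.
  unfold pp.
  assert (H1 := derivable_pt_lim_scal id (-mu) t 1 (derivable_pt_lim_id t)).
  assert (H2 := derivable_pt_lim_comp _ exp t _ _ H1 (derivable_pt_lim_exp _)).
  eapply dlim_ext; [| |exact H2].
  intros; reflexivity. unfold comp, mult_real_fct, id. ring.
Qed.

Lemma G_deriv lam mu z t n : 0 < mu ->
  derivable_pt_lim (fun s => G lam mu z s n) t (bw lam mu (G lam mu z) t n).
Proof.
  intros Hmu. set (r := rho lam mu).
  set (A := fun s => r * (z - 1) + (- (r * (z-1))) * pp mu s).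
  set (B := fun s => 1 + (z - 1) * pp mu s).
  assert (HA := dlim_affine _ _ _ (r * (z-1)) (-(r*(z-1))) (pp_deriv mu t)).
  assert (HB := dlim_affine _ _ _ 1 (z-1) (pp_deriv mu t)).
  assert (HeA := derivable_pt_lim_comp _ exp t _ _ HA (derivable_pt_lim_exp _)).
  assert (HBn := derivable_pt_lim_comp _ (fun y => y ^ n) t _ _ HB (derivable_pt_lim_pow _ n)).
  assert (HM := derivable_pt_lim_mult _ _ _ _ _ HeA HBn).
  eapply dlim_ext; [| |exact HM].
  - intros s. unfold mult_fct, comp, G, A, B. fold r. replace (r * (1 - pp mu s) * (z - 1)) with (r * (z - 1) + - (r * (z - 1)) * pp mu s) by ring. replace (pp mu s * (z - 1)) with ((z - 1) * pp mu s) by ring. reflexivity.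
  - unfold mult_fct, comp, bw, G. fold r.
    set (E := exp (r * (1 - pp mu t) * (z - 1))).
    replace (exp (r * (z - 1) + - (r * (z - 1)) * pp mu t)) with E by (unfold E; f_equal; ring).
    set (q := pp mu t).
    replace (1 + q * (z-1)) with (1 + (z-1) * q) by ring.
    set (b := 1 + (z-1) * q).
    assert (Hr : r * mu = lam) by (unfold r, rho; field; lra).
    destruct n as [|n].
    + simpl. unfold b. rewrite <- Hr. ring.
    + simpl Nat.pred. rewrite S_INR. simpl pow. unfold b. rewrite <- Hr. ring.
Qed.

Definition rc (f : R -> R) : Prop :=
  forall eps, 0 < eps -> exists d, 0 < d /\ forall t, 0 < t < d -> Rabs (f t - f 0) < eps.

Lemma rc_plus f g : rc f -> rc g -> rc (fun s => f s + g s).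
Proof.
  intros Hf Hg eps He. destruct (Hf (eps/2)) as [d1 [Hd1 H1]]; [lra|].
  destruct (Hg (eps/2)) as [d2 [Hd2 H2]]; [lra|].
  exists (Rmin d1 d2). split; [apply Rmin_glb_lt; auto|]. intros t Ht.
  assert (A := Rmin_l d1 d2). assert (B := Rmin_r d1 d2).
  specialize (H1 t ltac:(lra)). specialize (H2 t ltac:(lra)).
  replace (f t + g t - (f 0 + g 0)) with ((f t - f 0) + (g t - g 0)) by ring.
  eapply Rle_lt_trans; [apply Rabs_triang|lra].
Qed.

Lemma rc_scal f c : rc f -> rc (fun s => c * f s).
Proof.
  intros Hf eps He. destruct (Hf (eps / (Rabs c + 1))) as [d [Hd H]].
  { apply Rdiv_lt_0_compat; [lra|]. pose proof (Rabs_pos c); lra. }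
  exists d. split; auto. intros t Ht. specialize (H t Ht).
  replace (c * f t - c * f 0) with (c * (f t - f 0)) by ring.
  rewrite Rabs_mult. pose proof (Rabs_pos c). pose proof (Rabs_pos (f t - f 0)).
  assert (Hq : eps / (Rabs c + 1) * (Rabs c + 1) = eps) by (field; lra).
  assert (Rabs c * Rabs (f t - f 0) <= (Rabs c + 1) * Rabs (f t - f 0)) by nra.
  assert ((Rabs c + 1) * Rabs (f t - f 0) < (Rabs c + 1) * (eps / (Rabs c + 1))).
  { apply Rmult_lt_compat_l; lra. }
  lra.
Qed.

Lemma rc_ext f g : (forall s, f s = g s) -> rc f -> rc g.
Proof. intros E H eps He. destruct (H eps He) as [d [Hd H']]. exists d. split; auto.
  intros t Ht. rewrite <- !E. auto. Qed.

Lemma rc_cont f : continuity_pt f 0 -> rc f.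
Proof.
  intros H eps He. destruct (H eps He) as [d [Hd H']]. exists d. split; auto.
  intros t Ht. apply H'. split. split. constructor. lra. simpl. unfold Rdist.
  apply Rabs_def1; lra.
Qed.

Lemma G_rc lam mu z n : 0 < mu -> rc (fun s => G lam mu z s n).
Proof.
  intros Hmu. apply rc_cont. apply derivable_continuous_pt. eexists. apply G_deriv. auto.
Qed.

Lemma pp0 mu : pp mu 0 = 1.
Proof. unfold pp. replace (- mu * 0) with 0 by ring. apply exp_0. Qed.

Lemma G0 lam mu z n : G lam mu z 0 n = z ^ n.
Proof.
  unfold G. rewrite pp0. replace (rho lam mu * (1 - 1) * (z - 1)) with 0 by ring.
  rewrite exp_0. replace (1 + 1 * (z - 1)) with z by ring. ring.
Qed.

Lemma pp_bounds mu t : 0 < mu -> 0 <= t -> 0 < pp mu t <= 1.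
Proof.
  intros Hm Ht. unfold pp. split. apply exp_pos. rewrite <- exp_0.
  destruct (Req_dec t 0) as [->|]. right. f_equal; ring.
  left. apply exp_increasing. nra.
Qed.

Lemma G_nonneg lam mu z t n : 1 <= z -> 0 < mu -> 0 <= t -> 0 <= G lam mu z t n.
Proof.
  intros Hz Hm Ht. unfold G. pose proof (pp_bounds mu t Hm Ht).
  apply Rmult_le_pos. left; apply exp_pos. apply pow_le. nra.
Qed.

Lemma G_growth lam mu z t n : 0 < lam -> 1 <= z -> 0 < mu -> 0 <= t ->
  G lam mu z t n <= exp (rho lam mu * (z - 1)) * z ^ n.
Proof.
  intros Hl Hz Hm Ht. unfold G. pose proof (pp_bounds mu t Hm Ht).
  assert (Hr : 0 < rho lam mu) by (unfold rho; apply Rdiv_lt_0_compat; auto).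
  apply Rmult_le_compat. left; apply exp_pos. apply pow_le; nra.
  assert (rho lam mu * (1 - pp mu t) * (z - 1) <= rho lam mu * (z - 1)).
  { assert (0 <= rho lam mu * (z-1)) by nra.
    replace (rho lam mu * (1 - pp mu t) * (z - 1)) with (rho lam mu * (z-1) - pp mu t * (rho lam mu * (z-1))) by ring.
    nra. }
  destruct H0 as [H0|H0]. left; apply exp_increasing; auto. rewrite H0; right; reflexivity.
  apply pow_incr. nra.
Qed.

Section PS.
Variables (lam mu : R) (P : R -> nat -> nat -> R) (z : R).
Hypothesis Hlam : 0 < lam.
Hypothesis Hmu : 0 < mu.
Hypothesis Hz : 1 <= z.
Hypothesis HP : bd_transition lam mu P.

Definition SM (M : nat) (t : R) (n : nat) : R := sum_f_R0 (fun m => P t n m * z ^ m) M.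

Lemma SM_deriv M t n : 0 < t -> derivable_pt_lim (fun s => SM M s n) t (bw lam mu (SM M) t n).
Proof.
  intros Ht. destruct HP as [_ [_ [_ [_ Hd]]]].
  assert (Heq : sum_f_R0 (fun m => backward_rhs lam mu P t n m * z ^ m) M = bw lam mu (SM M) t n).
  { unfold bw, SM. induction M as [|M IH]. simpl. unfold backward_rhs. ring.
    simpl sum_f_R0. rewrite IH. unfold backward_rhs. ring. }
  rewrite <- Heq. clear Heq. induction M as [|M IH].
  - unfold SM. simpl. apply (derivable_pt_lim_scal_right (fun s => P s n 0%nat)). auto.
  - unfold SM in *. simpl sum_f_R0.
    assert (H2 := derivable_pt_lim_scal_right (fun s => P s n (S M)) _ _ (z ^ S M) (Hd t n (S M) Ht)).
    assert (H3 := derivable_pt_lim_plus _ _ _ _ _ IH H2). exact H3.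
Qed.

Lemma SM0 M n : SM M 0 n = if (n <=? M)%nat then z ^ n else 0.
Proof.
  destruct HP as [_ [_ [H0 _]]]. unfold SM. induction M as [|M IH].
  - simpl. rewrite H0. destruct n; simpl; ring.
  - simpl sum_f_R0. rewrite IH, H0. destruct (Nat.leb_spec n M); destruct (Nat.leb_spec n (S M));
      destruct (Nat.eqb_spec n (S M)); try lia; subst; simpl; ring.
Qed.

Lemma SM_rc M n : rc (fun s => SM M s n).
Proof.
  destruct HP as [_ [_ [H0 [Hr _]]]]. unfold SM. induction M as [|M IH].
  - simpl. apply (rc_ext (fun s => z ^ 0 * P s n 0%nat)). intros; ring.
    apply rc_scal. intros eps He. apply Hr; auto.
  - simpl. apply rc_plus; auto. apply (rc_ext (fun s => z ^ S M * P s n (S M))). intros; simpl; ring.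
    apply rc_scal. intros eps He. apply Hr; auto.
Qed.

Lemma Psum_le1 t n M : 0 <= t -> sum_f_R0 (P t n) M <= 1.
Proof.
  intros Ht. destruct HP as [Hnn [Hs _]]. apply growing_ineq.
  - intros k. simpl. pose proof (Hnn t n (S k) Ht). lra.
  - apply Hs; auto.
Qed.

Lemma P_le1 t n m : 0 <= t -> P t n m <= 1.
Proof.
  intros Ht. destruct HP as [Hnn _]. eapply Rle_trans; [|apply (Psum_le1 t n m Ht)].
  destruct m. simpl; lra. simpl. pose proof (cond_pos_sum (P t n) m (fun k => Hnn t n k Ht)). lra.
Qed.

Lemma SM_nonneg M t n : 0 <= t -> 0 <= SM M t n.
Proof.
  intros Ht. destruct HP as [Hnn _]. unfold SM. apply cond_pos_sum. intros m.
  apply Rmult_le_pos; auto. apply pow_le; lra.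
Qed.

Lemma w_rc (f g : R -> nat -> R) n : rc (fun s => f s n) -> rc (fun s => g s n) ->
  rc (fun s => f s n - g s n).
Proof.
  intros H1 H2. apply (rc_ext (fun s => f s n + (-1) * g s n)). intros; ring.
  apply rc_plus; auto. apply rc_scal; auto.
Qed.

Lemma rc_lt (f : R -> R) : rc f -> f 0 <= 0 -> forall eps, 0 < eps -> exists d, 0 < d /\ forall t, 0 < t < d -> f t < eps.
Proof.
  intros H H0 eps He. destruct (H eps He) as [d [Hd H']]. exists d. split; auto.
  intros t Ht. specialize (H' t Ht). apply Rabs_def2 in H'. lra.
Qed.

Lemma SM_le_G M t n : 0 <= t -> SM M t n <= G lam mu z t n.
Proof.
  intros Ht. cut (SM M t n - G lam mu z t n <= 0); [lra|].
  apply (maxp lam mu (fun s k => SM M s k - G lam mu z s k)); auto.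
  - intros s k Hs. eapply dlim_ext; [| |apply derivable_pt_lim_minus; [apply SM_deriv; auto|apply G_deriv; auto]].
    intros; reflexivity. unfold bw. ring. all: auto.
  - intros k. rewrite SM0, G0. destruct (k <=? M)%nat. lra. pose proof (pow_le z k). lra.
  - intros k. apply rc_lt. apply w_rc. apply SM_rc. apply G_rc; auto.
    rewrite SM0, G0. destruct (k <=? M)%nat. lra. pose proof (pow_le z k). lra.
  - exists (sum_f_R0 (fun m => z ^ m) M), 1. split; [lra|]. intros s k Hs.
    rewrite pow1, Rmult_1_r. pose proof (G_nonneg lam mu z s k Hz Hmu Hs).
    assert (SM M s k <= sum_f_R0 (fun m => z ^ m) M).
    { unfold SM. apply sum_Rle. intros m _. destruct HP as [Hnn _].
      pose proof (Hnn s k m Hs). pose proof (P_le1 s k m Hs). pose proof (pow_le z m ltac:(lra)). nra. }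
    lra.
Qed.

Lemma G_le_SM M t n : 0 <= t ->
  G lam mu z t n <= SM M t n + (/2) ^ (S M) * G lam mu (2 * z) t n.
Proof.
  intros Ht. set (c := (/2) ^ (S M)).
  cut (G lam mu z t n - SM M t n - c * G lam mu (2*z) t n <= 0); [lra|].
  assert (Hc : 0 < c) by (apply pow_lt; lra).
  assert (Hz2 : 1 <= 2 * z) by lra.
  assert (Hin : forall k, G lam mu z 0 k - SM M 0 k - c * G lam mu (2*z) 0 k <= 0).
  { intros k. rewrite SM0, !G0. assert (0 <= z ^ k) by (apply pow_le; lra).
    assert (0 <= (2*z) ^ k) by (apply pow_le; lra).
    destruct (Nat.leb_spec k M). nra.
    rewrite Rpow_mult_distr.
    assert (H2 : 2 ^ S M <= 2 ^ k) by (apply Rle_pow; lra || lia).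
    assert (Hc2 : c * 2 ^ S M = 1).
    { unfold c. rewrite <- Rpow_mult_distr. rewrite Rinv_l by lra. apply pow1. }
    assert (c * 2 ^ S M <= c * 2 ^ k) by (apply Rmult_le_compat_l; lra).
    assert (z ^ k <= c * 2 ^ k * z ^ k) by nra. nra. }
  apply (maxp lam mu (fun s k => G lam mu z s k - SM M s k - c * G lam mu (2*z) s k)); auto.
  - intros s k Hs. eapply dlim_ext; [| |apply derivable_pt_lim_minus;
      [apply derivable_pt_lim_minus; [apply G_deriv; auto|apply SM_deriv; auto]|
       apply (derivable_pt_lim_scal (fun s => G lam mu (2*z) s k)); apply G_deriv; auto]].
    intros; reflexivity. unfold bw. ring. all: auto.
  - intros k. apply (rc_lt (fun s => G lam mu z s k - SM M s k - c * G lam mu (2*z) s k)); [|apply Hin].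
    apply (w_rc (fun s k => G lam mu z s k - SM M s k) (fun s k => c * G lam mu (2*z) s k) k).
    apply (w_rc (G lam mu z) (SM M)). apply G_rc; auto. apply SM_rc.
    apply (rc_scal (fun s => G lam mu (2*z) s k)). apply G_rc; auto.
  - exists (exp (rho lam mu * (z - 1))), z. split; auto. intros s k Hs.
    pose proof (G_growth lam mu z s k Hlam Hz Hmu Hs).
    pose proof (SM_nonneg M s k Hs). pose proof (G_nonneg lam mu (2*z) s k Hz2 Hmu Hs).
    nra.
Qed.

Lemma gen_fun t n : 0 <= t -> infinite_sum (fun m => P t n m * z ^ m) (G lam mu z t n).
Proof.
  intros Ht eps He. set (G2 := G lam mu (2 * z) t n).
  assert (HG2 : 0 <= G2) by (apply G_nonneg; auto; lra).
  destruct (pow_lt_1_zero (/2) ltac:(rewrite Rabs_pos_eq; lra) (eps / (G2 + 1))) as [N HN].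
  { apply Rdiv_lt_0_compat; lra. }
  exists N. intros M HM. unfold Rdist.
  pose proof (SM_le_G M t n Ht). pose proof (G_le_SM M t n Ht).
  fold (SM M t n). fold G2 in H0.
  specialize (HN (S M) ltac:(lia)). rewrite Rabs_pos_eq in HN by (apply pow_le; lra).
  rewrite Rabs_left1 by lra.
  assert ((/2)^(S M) * G2 <= eps / (G2 + 1) * G2).
  { apply Rmult_le_compat_r; lra. }
  assert (eps / (G2 + 1) * G2 < eps).
  { assert (eps / (G2+1) * G2 = eps - eps / (G2 + 1)) by (field; lra).
    assert (0 < eps / (G2+1)) by (apply Rdiv_lt_0_compat; lra). lra. }
  lra.
Qed.
End PS.

Lemma exp_INR m : exp (INR m) = exp 1 ^ m.
Proof.
  induction m. simpl. apply exp_0. rewrite S_INR, exp_plus, IHm. simpl. ring.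
Qed.

Lemma exp_series x : infinite_sum (fun i => / INR (Factorial.fact i) * x ^ i) (exp x).
Proof. unfold exp. destruct (exist_exp x) as [l Hl]. simpl. exact Hl. Qed.

Lemma isum_ext f g l : (forall n, f n = g n) -> infinite_sum f l -> infinite_sum g l.
Proof.
  intros E H eps He. destruct (H eps He) as [N HN]. exists N. intros n Hn.
  rewrite <- (sum_eq f g n); auto.
Qed.

Lemma isum_scal f l c : infinite_sum f l -> infinite_sum (fun n => c * f n) (c * l).
Proof.
  intros H eps He. destruct (H (eps / (Rabs c + 1))) as [N HN].
  { apply Rdiv_lt_0_compat; [lra|]. pose proof (Rabs_pos c); lra. }
  exists N. intros n Hn. specialize (HN n Hn). unfold Rdist in *.
  rewrite <- (sum_eq (fun i => f i * c)) by (intros; ring).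
  rewrite <- scal_sum. replace (c * sum_f_R0 f n - c * l) with (c * (sum_f_R0 f n - l)) by ring.
  rewrite Rabs_mult. pose proof (Rabs_pos c). pose proof (Rabs_pos (sum_f_R0 f n - l)).
  assert (Hq : eps / (Rabs c + 1) * (Rabs c + 1) = eps) by (field; lra).
  assert ((Rabs c + 1) * Rabs (sum_f_R0 f n - l) < (Rabs c + 1) * (eps / (Rabs c + 1))).
  { apply Rmult_lt_compat_l; lra. }
  nra.
Qed.

Lemma dexp a s : derivable_pt_lim (fun s => exp (a * s)) s (a * exp (a * s)).
Proof.
  assert (H1 := derivable_pt_lim_scal id a s 1 (derivable_pt_lim_id s)).
  assert (H2 := derivable_pt_lim_comp _ exp s _ _ H1 (derivable_pt_lim_exp _)).
  eapply dlim_ext; [| |exact H2]. intros; reflexivity. unfold comp, mult_real_fct, id. ring.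
Qed.

Lemma convex_bound a p : 0 < a -> 0 < p <= 1 -> exp (a * p) - 1 <= (exp a - 1) * p.
Proof.
  intros Ha Hp. destruct (Req_dec p 1) as [->|Hp1]. rewrite Rmult_1_r; lra.
  destruct (MVT_cor2 (fun s => exp (a * s)) (fun s => a * exp (a * s)) 0 p) as [x [Hx Hx']].
  lra. intros; apply dexp.
  destruct (MVT_cor2 (fun s => exp (a * s)) (fun s => a * exp (a * s)) p 1) as [y [Hy Hy']].
  lra. intros; apply dexp.
  rewrite Rmult_0_r, exp_0 in Hx. rewrite Rmult_1_r in Hy.
  assert (exp (a * x) < exp (a * y)) by (apply exp_increasing; nra).
  assert (a * exp (a * x) * (p - 0) * (1 - p) <= a * exp (a * y) * (1 - p) * p).
  { assert (0 < a * p * (1 - p)) by (apply Rmult_lt_0_compat; [nra|lra]). nra. }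
  nra.
Qed.

Theorem mainTheorem5 (lam mu : R) (Hlam : 0 < lam) (Hmu : 0 < mu)
  (P : R -> nat -> nat -> R) (HP : bd_transition lam mu P) :
  exists c : R, 0 < c /\
    forall tau : R, exists v V : R,
      is_cov lam mu P tau v /\ is_var lam mu V /\
      c * exp (- mu * Rabs tau) <= v /\ v <= V * exp (- mu * Rabs tau).
Proof.
  set (e := exp 1). set (r := rho lam mu).
  assert (He : 1 < e) by (unfold e; pose proof (exp_increasing 0 1 ltac:(lra)) as HH; rewrite exp_0 in HH; lra).
  assert (Hr : 0 < r) by (unfold r, rho; apply Rdiv_lt_0_compat; auto).
  set (a := r * (e - 1) ^ 2).
  assert (Ha : 0 < a) by (unfold a; apply Rmult_lt_0_compat; auto; apply pow_lt; lra).
  assert (HLf : forall m, Lf lam mu m = exp (- (r * (e - 1))) * e ^ m).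
  { intros m. unfold Lf. fold r. unfold Rminus at 1. rewrite exp_plus, exp_INR. fold e. ring. }
  assert (Hsum : forall x C, infinite_sum (fun n => C * (/ INR (Factorial.fact n) * x ^ n)) (C * exp x)).
  { intros. apply isum_scal, exp_series. }
  assert (HM : infinite_sum (fun n => pi_st lam mu n * Lf lam mu n) 1).
  { replace 1 with (exp (-r) * exp (- (r * (e - 1))) * exp (r * e)).
    2: { rewrite <- !exp_plus. transitivity (exp 0); [f_equal; ring|apply exp_0]. }
    eapply isum_ext; [|apply Hsum]. intros n. simpl. rewrite HLf. unfold pi_st. fold r.
    rewrite Rpow_mult_distr. field. apply INR_fact_neq_0. }
  exists a. split; auto. intros tau.
  set (p := pp mu (Rabs tau)).
  assert (Hp : 0 < p <= 1) by (apply pp_bounds; auto; apply Rabs_pos).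
  exists (exp (a * p) - 1), (exp a - 1).
  change (exp (- mu * Rabs tau)) with p.
  split; [|split; [|split]].
  - exists (fun n => exp (- (r * (e - 1))) * G lam mu e (Rabs tau) n), (exp (a * p)), 1.
    split; [|split; [|split]].
    + intros n. eapply isum_ext; [|apply isum_scal, (gen_fun lam mu P e); auto; try lra; apply Rabs_pos].
      intros m. simpl. rewrite HLf. ring.
    + set (q := 1 + p * (e - 1)).
      replace (exp (a * p)) with (exp (-r) * exp (- (r * (e - 1))) * exp (- (r * (e - 1)))
                                  * exp (r * (1 - p) * (e - 1)) * exp (r * e * q)).
      2: { rewrite <- !exp_plus. f_equal. unfold a, q. ring. }
      eapply isum_ext; [|apply Hsum]. intros n. simpl. rewrite HLf. unfold pi_st, G. fold r. fold p. fold q.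
      rewrite !Rpow_mult_distr. field. apply INR_fact_neq_0.
    + exact HM.
    + ring.
  - exists (exp a), 1. split; [|split; [exact HM|ring]].
    replace (exp a) with (exp (-r) * exp (- (r * (e - 1))) * exp (- (r * (e - 1))) * exp (r * (e * e))).
    2: { rewrite <- !exp_plus. f_equal. unfold a. ring. }
    eapply isum_ext; [|apply Hsum]. intros n. simpl. rewrite HLf. unfold pi_st. fold r.
    rewrite !Rpow_mult_distr. field. apply INR_fact_neq_0.
  - pose proof (exp_ineq1_le (a * p)). lra.
  - apply convex_bound; auto.
Qed.
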